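(* Let $n=2^\ell$, and let $S=\{u_1,\dots,u_m\}\subseteq\mathbb{F}_2^d\setminus\{0\}$ be a set of $m$ distinct nonzero vectors. Let $h:\mathbb{F}_2^d\to\mathbb{F}_2^\ell$ be a uniformly random linear map. Fix $y\in\mathbb{F}_2^\ell$ and define $Z_y:=|\{i:h(u_i)=y\}|$, and let $\lambda:=m/n$. Then for every integer $r\ge0$, with $a:=\lceil\log(r+2)\rceil$, \[ \Pr[Z_y>r]\le\lambda^a\left(\prod_{j=0}^{a-1}(r+2-2^j)\right)^{-1}. \]
   Context: $\log$ denotes the base-$2$ logarithm. A uniformly random linear map is chosen uniformly among all linear maps $\mathbb{F}_2^d\to\mathbb{F}_2^\ell$. *)

(* Defs.v *)
From mathcomp Require Import all_boot all_order all_algebra.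
Set Implicit Arguments. Unset Strict Implicit. Unset Printing Implicit Defensive.
Import GRing.Theory Num.Theory.
Local Open Scope ring_scope.

(* F_2^d is modelled by row vectors 'rV['F_2]_d; a linear map
   F_2^d -> F_2^l is a matrix A : 'M['F_2]_(d, l) acting by u |-> u *m A
   (this is a bijection between matrices and linear maps, so the uniform
   distribution on matrices is the uniform distribution on linear maps). *)

Definition Zcount (d l : nat) (S : {set 'rV['F_2]_d}) (y : 'rV['F_2]_l)
  (A : 'M['F_2]_(d, l)) : nat :=
  #|[set u in S | u *m A == y]|.

Definition prob_lin (d l : nat) (E : pred 'M['F_2]_(d, l)) : rat :=
  (#|[set A | E A]|)%:R / (#|{: 'M['F_2]_(d, l)}|)%:R.

(* Main.v *)
Require Import Defs.
From mathcomp Require Import all_boot all_order all_algebra.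
Import GRing.Theory Num.Theory.
Local Open Scope ring_scope.

Lemma card_F2 : #|'F_2| = 2%N.
Proof. by rewrite card_Fp. Qed.

Lemma card_M2 m n : #|{: 'M['F_2]_(m, n)}| = (2 ^ (m * n))%N.
Proof. by rewrite card_mx card_F2. Qed.

Lemma span_card (k d : nat) (V : 'M['F_2]_(k, d)) (T : {set 'rV['F_2]_d}) :
  0 \notin T -> (#|[set u in T | (u <= V)%MS]|.+1 <= 2 ^ k)%N.
Proof.
move=> T0.
have -> : (2 ^ k)%N = #|{: 'rV['F_2]_k}| by rewrite card_M2 mul1n.
have := cardsU1 0 [set u in T | (u <= V)%MS]; rewrite inE (negbTE T0) /= add1n => <-.
apply: leq_trans (leq_imset_card (fun c : 'rV['F_2]_k => c *m V) _).
apply: subset_leq_card; apply/subsetP => u; rewrite !inE => /predU1P[->|/andP[_ /submxP[c ->]]].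
  by apply/imsetP; exists 0; rewrite ?inE ?mul0mx.
by apply/imsetP; exists c; rewrite ?inE.
Qed.

Lemma row_free_colmx (k d : nat) (u : 'rV['F_2]_d) (V : 'M['F_2]_(k, d)) :
  row_free V -> ~~ (u <= V)%MS -> row_free (col_mx u V).
Proof.
move=> /eqP fV uV.
have u0 : u != 0 by apply: contraNneq uV => ->; rewrite sub0mx.
have hc : \rank (u :&: V)%MS = 0%N.
  case: (mxrank_leqif_sup (capmxSl u V)) => le eqi.
  move: le eqi; rewrite rank_rV u0 /=.
  case: (ltngtP (\rank (u :&: V)%MS) 1) => [|//|h _ eqi].
    by rewrite ltnS leqn0 => /eqP.
  move: eqi; rewrite h => /esym hs.
  idtac.
  by rewrite (submx_trans hs (capmxSr u V)) in uV.
have := mxrank_sum_cap u V.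
by rewrite /row_free -addsmxE hc addn0 rank_rV u0 fV => ->.
Qed.

Definition Good (k d : nat) (T : {set 'rV['F_2]_d}) :=
  [set V : 'M['F_2]_(k, d) | row_free V && [forall i, row i V \in T]].

Arguments Good k {d} T.

Lemma good_count (k d : nat) (T : {set 'rV['F_2]_d}) : 0 \notin T ->
  (\prod_(j < k) (#|T|.+1 - 2 ^ j) <= #|Good k T|)%N.
Proof.
move=> T0; elim: k => [|k IH].
  rewrite big_ord0; apply/card_gt0P; exists 0; rewrite inE; apply/andP; split.
    by rewrite /row_free -leqn0 rank_leq_row.
  by apply/forallP => -[].
rewrite big_ord_recr /=.
have -> : #|Good k.+1 T| = (\sum_(u : 'rV['F_2]_d) \sum_(V : 'M['F_2]_(k, d))
     (col_mx u V \in Good k.+1 T))%N.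
  rewrite pair_big /= -sum1_card big_mkcond /=.
  rewrite (reindex (fun p : 'rV['F_2]_d * 'M['F_2]_(k, d) => (col_mx p.1 p.2 : 'M_(k.+1, d)))) /=.
    by apply: eq_bigr => -[u V] _ /=; case: (_ \in _).
  exists (fun W : 'M['F_2]_(1 + k, d) => (usubmx W, dsubmx W)) => [[u V] _|W _] /=.
    by rewrite col_mxKu col_mxKd.
  by rewrite vsubmxK.
rewrite exchange_big /=.
apply: leq_trans (_ : \sum_(V in Good k T) (#|T|.+1 - 2 ^ k) <= _)%N.
  by rewrite sum_nat_const leq_mul2r IH orbT.
rewrite [X in (_ <= X)%N](bigID (fun V => V \in Good k T)) /=.
apply: leq_trans (leq_addr _ _); apply: leq_sum => V VG.
have Sp : (#|T :&: [set u | (u <= V)%MS]|.+1 <= 2 ^ k)%N.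
  have -> : T :&: [set u | (u <= V)%MS] = [set u in T | (u <= V)%MS].
    by apply/setP => u; rewrite !inE.
  exact: span_card.
have := cardsID [set u | (u <= V)%MS] T.
move=> hc; apply: (@leq_trans #|T :\: [set u | (u <= V)%MS]|).
  rewrite leq_subLR -hc -addSn leq_add2r //.
rewrite -sum1_card big_mkcond /=; apply: leq_sum => u _.
case: ifP => // /setDP [uT]; rewrite inE => uV.
move: VG; rewrite !inE => /andP [fV rT].
rewrite lt0b (@row_free_colmx _ _ _ _ fV uV) /=.
apply/forallP => i; rewrite -(@splitK 1 k i); case: (split _) => j /=.
  by have -> : row (lshift k j) (col_mx u V) = row j u := rowKu j u V; rewrite row_id.
by have -> : row (rshift 1 j) (col_mx u V) = row j V := rowKd j u V; rewrite (forallP rT).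
Qed.

Lemma fiber_card (a d l : nat) (V : 'M['F_2]_(a, d)) (Y : 'M['F_2]_(a, l)) :
  row_free V ->
  (#|[set A : 'M['F_2]_(d, l) | V *m A == Y]| * 2 ^ (a * l) = 2 ^ (d * l))%N.
Proof.
case/row_freeP => W VW.
have fib : forall Y' : 'M['F_2]_(a, l),
    #|[set A : 'M['F_2]_(d, l) | V *m A == Y']| = #|[set A : 'M['F_2]_(d, l) | V *m A == 0]|.
  move=> Y'.
  have -> : [set A : 'M['F_2]_(d, l) | V *m A == Y'] =
            (fun A => A + W *m Y') @: [set A : 'M['F_2]_(d, l) | V *m A == 0].
    apply/setP => A; rewrite inE; apply/idP/imsetP.
      move=> /eqP VA; exists (A - W *m Y'); last by rewrite subrK.
      by rewrite inE mulmxBr VA mulmxA VW mul1mx subrr.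
    by case=> B; rewrite inE => /eqP VB ->; rewrite mulmxDr VB add0r mulmxA VW mul1mx.
  by rewrite card_imset //; apply: addIr.
rewrite -!card_M2 fib.
have -> : #|{: 'M['F_2]_(d, l)}| = (\sum_(A : 'M['F_2]_(d, l)) 1)%N by rewrite sum1_card.
rewrite (eq_bigr (fun A => \sum_(Y' : 'M['F_2]_(a, l)) (V *m A == Y' : nat))%N); last first.
  move=> A _; rewrite (bigD1 (V *m A)) //= eqxx big1 // => Y' /negbTE.
  by rewrite eq_sym => ->.
rewrite exchange_big /= -[#|{: 'M['F_2]_(a, l)}|]sum1_card big_distrr /=.
apply: eq_bigr => Y' _; rewrite muln1 -(fib Y') -sum1_card big_mkcond /=.
by apply: eq_bigr => A _; rewrite inE; case: (_ == _).
Qed.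

Lemma cardsum (T : finType) (P : pred T) : #|[set x | P x]| = (\sum_x (P x : nat))%N.
Proof. by rewrite -sum1_card big_mkcond /=; apply: eq_bigr => x _; rewrite inE; case: (P x). Qed.

Lemma good_le (a d : nat) (S : {set 'rV['F_2]_d}) : (#|Good a S| <= #|S| ^ a)%N.
Proof.
pose f (V : 'M['F_2]_(a, d)) := [ffun i => row i V].
have finj : injective f.
  move=> V1 V2 /ffunP h; apply/row_matrixP => i; have := h i; rewrite !ffunE.
  done.
rewrite -(card_imset _ finj) -[a in (_ <= _ ^ a)%N]card_ord -card_ffun_on.
apply: subset_leq_card; apply/subsetP => g /imsetP [V]; rewrite inE => /andP [_ /forallP h] ->.
by apply/ffun_onP => i; rewrite ffunE.
Qed.

Lemma main_nat (d l : nat) (S : {set 'rV['F_2]_d}) (y : 'rV['F_2]_l) (r a : nat) :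
  0 \notin S ->
  (#|[set A | (r < Zcount S y A)%N]| * \prod_(j < a) (r + 2 - 2 ^ j) * 2 ^ (a * l)
    <= #|S| ^ a * 2 ^ (d * l))%N.
Proof.
move=> S0.
pose Y0 : 'M['F_2]_(a, l) := \matrix_(i, j) y 0 j.
have rowY : forall i, row i Y0 = y by move=> i; apply/rowP => j; rewrite !mxE.
pose GA (A : 'M['F_2]_(d, l)) := [set V | (V \in Good a S) && (V *m A == Y0)].
have step1 : forall A, (r < Zcount S y A)%N -> (\prod_(j < a) (r + 2 - 2 ^ j) <= #|GA A|)%N.
  move=> A; rewrite /Zcount => hr.
  set TA := [set u in S | u *m A == y].
  have TA0 : 0 \notin TA by rewrite inE (negbTE S0).
  apply: (@leq_trans (\prod_(j < a) (#|TA|.+1 - 2 ^ j))).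
    apply: leq_prod => j _; apply: leq_sub2r; rewrite addn2; exact: hr.
  apply: leq_trans (@good_count a d TA TA0) _.
  apply: subset_leq_card; apply/subsetP => V; rewrite !inE => /andP [fV /forallP h].
  rewrite fV /=; apply/andP; split.
    by apply/forallP => i; have := h i; rewrite inE => /andP [].
  apply/eqP/row_matrixP => i; rewrite row_mul rowY.
  by have := h i; rewrite inE => /andP [_ /eqP].
have step2 : (#|[set A | (r < Zcount S y A)%N]| * \prod_(j < a) (r + 2 - 2 ^ j)
     <= \sum_A #|GA A|)%N.
  rewrite -sum_nat_const [X in (_ <= X)%N](bigID (fun A => A \in [set A | (r < Zcount S y A)%N])) /=.
  apply: leq_trans (leq_addr _ _); apply: leq_sum => A; rewrite inE; exact: step1.
have step3 : ((\sum_A #|GA A|) * 2 ^ (a * l) = #|Good a S| * 2 ^ (d * l))%N.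
  have -> : (\sum_A #|GA A| = \sum_(V in Good a S) #|[set A : 'M['F_2]_(d, l) | V *m A == Y0]|)%N.
    rewrite (eq_bigr (fun A => \sum_V ((V \in Good a S) && (V *m A == Y0)) : nat))%N; last first.
      by move=> A _; rewrite cardsum.
    rewrite exchange_big /= [RHS]big_mkcond /=; apply: eq_bigr => V _.
    case: ifP => VG; first by rewrite cardsum.
    by rewrite big1.
  rewrite big_distrl /= -sum_nat_const; apply: eq_bigr => V.
  rewrite inE => /andP [fV _]; exact: fiber_card.
apply: leq_trans (leq_mul step2 (leqnn (2 ^ (a * l)))) _; rewrite step3.
by rewrite leq_mul2r good_le orbT.
Qed.

Theorem theoremB1 (d l : nat) (S : {set 'rV['F_2]_d}) (y : 'rV['F_2]_l) (r : nat) :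
  0 \notin S ->
  prob_lin (fun A => (r < Zcount S y A)%N)
  <= ((#|S|)%:R / (2 ^ l)%:R) ^+ (up_log 2 (r + 2))
     / \prod_(j < up_log 2 (r + 2)) ((r + 2)%:R - (2 ^ j)%:R : rat).
Proof.
move=> S0.
set a := up_log 2 (r + 2).
have lt2 : forall j : 'I_a, (2 ^ j < r + 2)%N.
  move=> j; rewrite ltnNge; apply/negP => h.
  by have := up_log_min (isT : (1 < 2)%N) h; rewrite -/a leqNgt ltn_ord.
have PE : \prod_(j < a) ((r + 2)%:R - (2 ^ j)%:R : rat) = (\prod_(j < a) (r + 2 - 2 ^ j))%:R.
  by rewrite natr_prod; apply: eq_bigr => j _; rewrite natrB // ltnW.
have Pp : (0 < \prod_(j < a) (r + 2 - 2 ^ j))%N.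
  by rewrite prodn_gt0 // => j; rewrite subn_gt0.
have H := @main_nat d l S y r a S0.
rewrite /prob_lin card_M2 expr_div_n -!natrX -expnM PE.
rewrite ler_pdivlMr ?ltr0n // ler_pdivlMr ?ltr0n ?expn_gt0 //.
rewrite -!mulrA mulrCA ler_pdivrMl ?ltr0n ?expn_gt0 //.
by rewrite -!natrM ler_nat mulnA [(l * a)%N]mulnC [(2 ^ (d * l) * _)%N]mulnC.
Qed.
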